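(* Assume $p$ is odd and $\ell\ge2$. An irreducible representation of ${\rm GL}_2(\mathfrak o_\ell)$ admits a $\theta$-Whittaker model for a (equivalently, any) non-degenerate character $\theta$ of $\mathbf U(\mathfrak o_\ell)$ if and only if it is primitive.
   Context: $\mathfrak o$: ring of integers of a non-archimedean local field, uniformizer $\varpi$, residue field $\mathbb F_q$ of characteristic $p$; $\mathfrak o_r=\mathfrak o/\varpi^r\mathfrak o$. $\mathbf U(\mathfrak o_\ell)=\{\begin{pmatrix}1&u\\0&1\end{pmatrix}\}$; a non-degenerate character is $\theta\begin{pmatrix}1&u\\0&1\end{pmatrix}=\varphi_1(u)$ with $\varphi_1$ a character of $(\mathfrak o_\ell,+)$ nontrivial on $\varpi^{\ell-1}\mathfrak o_\ell$. $\pi$ admits a $\theta$-Whittaker model if $\mathrm{Hom}(\pi,\mathrm{Ind}_{\mathbf U(\mathfrak o_\ell)}^{{\rm GL}_2(\mathfrak o_\ell)}\theta)\ne0$. Let $K_\ell^{\ell-1}=\ker({\rm GL}_2(\mathfrak o_\ell)\to{\rm GL}_2(\mathfrak o_{\ell-1}))=\{I+\varpi^{\ell-1}y\}$; fixing a primitive $\varphi$, each $x\in M_2(\mathbb F_q)$ gives a character $\varphi_x(I+\varpi^{\ell-1}y)=\varphi(\varpi^{\ell-1}\mathrm{tr}(\hat xy))$. An irreducible representation $\rho$ is primitive if the orbit of characters occurring in $\rho|_{K_\ell^{\ell-1}}$ contains no $\varphi_x$ with $x$ a scalar matrix. *)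

(* Defs.v *)
From HB Require Import structures.
From mathcomp Require Import all_boot all_order all_algebra all_fingroup all_solvable all_field all_character.
Set Implicit Arguments. Unset Strict Implicit. Unset Printing Implicit Defensive.
Import GRing.Theory Num.Theory.
Local Open Scope ring_scope.

(* o_l is modelled by a finite commutative ring R with an element w (the image
   of the uniformizer) such that R is local with maximal ideal wR,
   w^l = 0, w^(l-1) <> 0, and the residue field R/wR has characteristic p. *)

Definition in_ideal (R : comPzRingType) (a x : R) : Prop := exists y, x = a * y.

Definition is_trunc_dvr (R : finComUnitRingType) (w : R) (l p : nat) : Prop :=
  [/\ (forall x : R, x \is a GRing.unit \/ in_ideal w x),
      w ^+ l = 0, w ^+ l.-1 != 0 & in_ideal w (p%:R : R)].

Definition add_char (R : finComUnitRingType) (phi : R -> algC) : Prop :=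
  phi 0 = 1 /\ forall a b, phi (a + b) = phi a * phi b.

Definition primitive_add_char (R : finComUnitRingType) (w : R) (l : nat)
    (phi : R -> algC) : Prop :=
  add_char phi /\ exists u, in_ideal (w ^+ l.-1) u /\ phi u != 1.

Definition nmat (R : finComUnitRingType) (u : R) : 'M[R]_2 :=
  \matrix_(i < 2, j < 2)
     (if i == j then 1 else if (i == 0) && (j == 1) then u else 0).

Definition Uset (R : finComUnitRingType) : {set {'GL_2[R]}} :=
  [set g : {'GL_2[R]} | [exists u : R, GLval g == nmat u]].
Definition Ugrp (R : finComUnitRingType) := (<< Uset R >>)%G.

Definition Kset (R : finComUnitRingType) (w : R) (l : nat) : {set {'GL_2[R]}} :=
  [set g : {'GL_2[R]} | [exists y : 'M[R]_2, GLval g == 1 + (w ^+ l.-1) *: y]].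
(* K_l^{l-1} = ker(GL_2(o_l) -> GL_2(o_{l-1})) = { I + w^(l-1) y } *)
Definition Kgrp (R : finComUnitRingType) (w : R) (l : nat) := (<< Kset w l >>)%G.

Definition nondeg_char (R : finComUnitRingType) (w : R) (l : nat)
    (theta : 'CF(Ugrp R)) : Prop :=
  exists phi1 : R -> algC, primitive_add_char w l phi1 /\
    forall (g : {'GL_2[R]}) (u : R), g \in Ugrp R -> GLval g = nmat u ->
      theta g = phi1 u.

Definition has_whittaker (R : finComUnitRingType) (theta : 'CF(Ugrp R))
    (i : Iirr 'GL_2[R]) : Prop :=
  '[ 'chi_i, 'Ind['GL_2[R]] theta ] != 0.

(* psi is a character phi_x of K_l^{l-1} with x a scalar matrix in M_2(F_q):
   phi_x(I + w^(l-1) y) = phi(w^(l-1) tr(xhat y)) with xhat = a I, a in o_l *)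
Definition scalar_type (R : finComUnitRingType) (w : R) (l : nat)
    (phi : R -> algC) (psi : 'CF(Kgrp w l)) : Prop :=
  exists a : R, forall (g : {'GL_2[R]}) (y : 'M[R]_2), g \in Kgrp w l ->
    GLval g = 1 + (w ^+ l.-1) *: y ->
    psi g = phi (w ^+ l.-1 * \tr ((a%:M : 'M[R]_2) *m y)).

Definition primitive_irr (R : finComUnitRingType) (w : R) (l : nat)
    (phi : R -> algC) (i : Iirr 'GL_2[R]) : Prop :=
  forall j : Iirr (Kgrp w l), j \in irr_constt ('Res[Kgrp w l] 'chi_i) ->
    ~ scalar_type phi 'chi_j.

(* Main.v *)
From Pilot Require Import Defs.
From HB Require Import structures.
From mathcomp Require Import all_boot all_order all_algebra all_fingroup all_solvable all_field all_character.
From mathcomp Require Import ring.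
Set Implicit Arguments. Unset Strict Implicit. Unset Printing Implicit Defensive.
Import GRing.Theory Num.Theory.
Local Open Scope ring_scope.
Local Notation add_char := Pilot.Defs.add_char.

Ltac mx22 := apply/matrixP; case => [[|[|//]] ?]; case => [[|[|//]] ?];
  rewrite !mxE ?big_ord_recl ?big_ord0 /= ?mxE /=.


Lemma trunc_wN (R : finComUnitRingType) (w : R) l p :
  (1 <= l)%N -> is_trunc_dvr w l p -> w * w ^+ l.-1 = 0.
Proof.
move=> hl [_ hwl _ _]; rewrite -exprS prednK //.
Qed.

Lemma trunc_cN (R : finComUnitRingType) (w : R) l p c :
  (1 <= l)%N -> is_trunc_dvr w l p -> c \isn't a GRing.unit -> c * w ^+ l.-1 = 0.
Proof.
move=> hl hR cU; have [hdv _ _ _] := hR.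
case: (hdv c) => [cU'|[y hy]]; first by rewrite cU' in cU.
by rewrite hy mulrAC (trunc_wN hl hR) mul0r.
Qed.

Lemma trunc_NN (R : finComUnitRingType) (w : R) l p :
  (2 <= l)%N -> is_trunc_dvr w l p -> w ^+ l.-1 * w ^+ l.-1 = 0.
Proof.
move=> hl hR; have [_ _ hN _] := hR.
have e : l.-1 = (l.-2).+1 by case: (l) hl => [|[|l']].
rewrite {1}e exprS -mulrA mulrCA.
by rewrite (trunc_wN (ltnW hl) hR) mulr0.
Qed.

Lemma trunc_uN (R : finComUnitRingType) (w : R) l p c :
  is_trunc_dvr w l p -> c \is a GRing.unit -> c * w ^+ l.-1 != 0.
Proof.
move=> [_ _ hN _] cU; apply: contra hN => /eqP h.
by rewrite -(mulKr cU (w ^+ l.-1)) h mulr0.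
Qed.

Lemma trunc_chain (R : finComUnitRingType) (w : R) l p y :
  is_trunc_dvr w l p -> y != 0 -> exists z, y * z = w ^+ l.-1.
Proof.
move=> hR; have [hdv hwl hN _] := hR.
have H : forall n, (exists e, y = w ^+ n * e) \/
          exists k, exists e, [/\ (k < n)%N, e \is a GRing.unit & y = w ^+ k * e].
  elim=> [|n IH]; first by left; exists y; rewrite expr0 mul1r.
  case: IH => [[e he]|[k [e [hk eU he]]]]; last by right; exists k, e; split=> //; apply: ltnW.
  case: (hdv e) => [eU|[e' he']].
    by right; exists n, e; split.
  by left; exists e'; rewrite he he' mulrA -exprSr.
move=> y0; case: (H l) => [[e he]|[k [e [hk eU he]]]].
  by move: y0; rewrite he hwl mul0r eqxx.
exists (e^-1 * w ^+ (l.-1 - k)); rewrite he mulrA -(mulrA _ e) mulrV // mulr1 -exprD.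
by rewrite subnKC //; move: hk; case: (l) => [|l0].
Qed.



Lemma addc0 (R : finComUnitRingType) (f : R -> algC) : add_char f -> f 0 = 1.
Proof. by case. Qed.

Lemma addcD (R : finComUnitRingType) (f : R -> algC) a b : add_char f -> f (a + b) = f a * f b.
Proof. by case=> _ ->. Qed.

Lemma addcN (R : finComUnitRingType) (f : R -> algC) a : add_char f -> f (- a) * f a = 1.
Proof. by move=> hf; rewrite -addcD // addNr addc0. Qed.

Lemma addcMn (R : finComUnitRingType) (f : R -> algC) a n : add_char f -> f (a *+ n) = f a ^+ n.
Proof.
move=> hf; elim: n => [|n IH]; first by rewrite mulr0n expr0 addc0.
by rewrite mulrS addcD // IH exprS.
Qed.

Lemma add_char_sum (R : finComUnitRingType) (f : R -> algC) :
  add_char f -> (exists s0, f s0 != 1) -> \sum_(s : R) f s = 0.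
Proof.
move=> hf [s0 hs0].
have e : \sum_(s : R) f s = f s0 * \sum_(s : R) f s.
  rewrite {1}(reindex_inj (addIr s0)) /= mulr_sumr; apply: eq_bigr => s _.
  by rewrite addcD // mulrC.
have : (1 - f s0) * \sum_(s : R) f s = 0 by rewrite mulrBl mul1r -e subrr.
by move/eqP; rewrite mulf_eq0 subr_eq0 eq_sym (negbTE hs0) /= => /eqP.
Qed.

Lemma add_char_triv (R : finComUnitRingType) (f : R -> algC) :
  add_char f -> \sum_(s : R) f s != 0 -> forall s, f s = 1.
Proof.
move=> hf hs s; apply/eqP; apply/negPn/negP => h.
by move: hs; rewrite (add_char_sum hf) ?eqxx //; exists s.
Qed.

Lemma trunc_char0 (R : finComUnitRingType) (w : R) l p :
  is_trunc_dvr w l p -> (p ^ l)%:R = 0 :> R.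
Proof.
move=> [_ hwl _ [y hy]]; by rewrite natrX hy exprMn hwl mul0r.
Qed.

Lemma addc_conj (R : finComUnitRingType) (w : R) l p (f : R -> algC) x :
  prime p -> is_trunc_dvr w l p -> add_char f -> (f x)^* = f (- x).
Proof.
move=> pp hR hf.
have hm : f x ^+ (p ^ l) = 1.
  by rewrite -addcMn // -mulr_natr (trunc_char0 hR) mulr0 addc0.
have n1 : `|f x| = 1.
  apply/eqP; rewrite -(@pexpr_eq1 _ _ (p ^ l)) ?normr_ge0 ?expn_gt0 ?prime_gt0 //.
  by rewrite -normrX hm normr1.
have h1 : (f x)^* * f x = 1 by rewrite mulrC -normCK n1 expr1n.
by rewrite -[RHS]mul1r -h1 -mulrA (mulrC (f x)) addcN // mulr1.
Qed.

Lemma fourier (R : finComUnitRingType) (w : R) l p (f : R -> algC) y :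
  is_trunc_dvr w l p -> primitive_add_char w l f ->
  \sum_(c : R) f (c * y) = if y == 0 then #|R|%:R else 0.
Proof.
move=> hR [hf [u [[r hr] hu]]].
have [->|y0] := eqVneq y 0.
  under eq_bigr do rewrite mulr0 addc0 //.
  by rewrite sumr_const.
have [z hz] := trunc_chain hR y0.
apply: (add_char_sum (f := fun c => f (c * y))).
  split; first by rewrite mul0r addc0.
  by move=> a b; rewrite mulrDl addcD.
exists (z * r); by rewrite mulrAC (mulrC z) hz -hr.
Qed.




Definition GLof (R : finComUnitRingType) (M : 'M[R]_2) : {'GL_2[R]} :=
  odflt (1%g : {'GL_2[R]}) (insub M).

Lemma GLofE (R : finComUnitRingType) (M : 'M[R]_2) :
  M \in unitmx -> GLval (GLof M) = M.
Proof. by move=> hM; rewrite /GLof insubT. Qed.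

Lemma GLval_inj (R : finComUnitRingType) : injective (@GLval 2 R).
Proof. exact: val_inj. Qed.

Lemma nmatM (R : finComUnitRingType) (u v : R) : nmat u *m nmat v = nmat (u + v).
Proof. rewrite /nmat; mx22; ring. Qed.

Lemma nmat0 (R : finComUnitRingType) : nmat (0 : R) = 1%:M.
Proof. rewrite /nmat; mx22; ring. Qed.

Lemma nmat_unit (R : finComUnitRingType) (u : R) : nmat u \in unitmx.
Proof. by case: (@mulmx1_unit _ _ (nmat u) (nmat (- u))); rewrite // nmatM subrr nmat0. Qed.

Definition nGL (R : finComUnitRingType) (u : R) : {'GL_2[R]} := GLof (nmat u).

Lemma nGLE (R : finComUnitRingType) (u : R) : GLval (nGL u) = nmat u.
Proof. exact/GLofE/nmat_unit. Qed.

Lemma nGLM (R : finComUnitRingType) (u v : R) : (nGL u * nGL v)%g = nGL (u + v).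
Proof. by apply: GLval_inj; rewrite GL_MxE !nGLE nmatM. Qed.

Lemma nGL0 (R : finComUnitRingType) : nGL (0 : R) = 1%g.
Proof. by apply: GLval_inj; rewrite nGLE nmat0. Qed.

Lemma nmat_inj (R : finComUnitRingType) : injective (@nmat R).
Proof. by move=> u v /matrixP /(_ 0 1); rewrite !mxE. Qed.

Lemma nGL_inj (R : finComUnitRingType) : injective (@nGL R).
Proof. by move=> u v /(congr1 GLval); rewrite !nGLE => /nmat_inj. Qed.

Lemma Uset_group (R : finComUnitRingType) : group_set (Uset R).
Proof.
apply/group_setP; split.
  by rewrite inE; apply/existsP; exists 0; rewrite nmat0.
move=> x y; rewrite !inE => /existsP[u /eqP hu] /existsP[v /eqP hv].
by apply/existsP; exists (u + v); rewrite GL_MxE hu hv nmatM.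
Qed.

Lemma memU (R : finComUnitRingType) (g : {'GL_2[R]}) :
  (g \in Ugrp R) = [exists u, GLval g == nmat u].
Proof. by rewrite /Ugrp /= gen_set_id ?Uset_group // inE. Qed.

Lemma Ugrp_im (R : finComUnitRingType) : (Ugrp R : {set _}) = [set nGL u | u : R].
Proof.
apply/setP=> g; rewrite memU; apply/existsP/imsetP => [[u /eqP hu]|[u _ ->]].
  by exists u => //; apply: GLval_inj; rewrite nGLE.
by exists u; rewrite nGLE.
Qed.

Lemma nGL_U (R : finComUnitRingType) (u : R) : nGL u \in Ugrp R.
Proof. by rewrite Ugrp_im imset_f. Qed.

Lemma sum_U (R : finComUnitRingType) (F : {'GL_2[R]} -> algC) :
  \sum_(g in Ugrp R) F g = \sum_(u : R) F (nGL u).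
Proof.
rewrite Ugrp_im big_imset //= => u v _ _; exact: nGL_inj.
Qed.

Lemma card_U (R : finComUnitRingType) : #|Ugrp R| = #|R|.
Proof. by rewrite Ugrp_im card_imset //; exact: nGL_inj. Qed.


Lemma KmatM (R : finComUnitRingType) (N : R) (y z : 'M[R]_2) : N * N = 0 ->
  (1%:M + N *: y) *m (1%:M + N *: z) = 1%:M + N *: (y + z).
Proof.
move=> hN; rewrite mulmxDl !mulmxDr !mul1mx mulmx1 -scalemxAl -scalemxAr scalerA hN scale0r.
by rewrite addr0 scalerDr (addrC (N *: y)) addrA.
Qed.

Lemma Kmat_unit (R : finComUnitRingType) (N : R) (y : 'M[R]_2) : N * N = 0 ->
  (1%:M + N *: y) \in unitmx.
Proof.
move=> hN; case: (@mulmx1_unit _ _ (1%:M + N *: y) (1%:M + N *: (- y))) => //.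
by rewrite KmatM // subrr scaler0 addr0.
Qed.

Lemma one_mx (R : finComUnitRingType) : (1 : 'M[R]_2) = 1%:M.
Proof. by []. Qed.

Lemma Kset_group (R : finComUnitRingType) (w : R) l p : (2 <= l)%N -> is_trunc_dvr w l p ->
  group_set (Kset w l).
Proof.
move=> hl hR; have hN := trunc_NN hl hR.
apply/group_setP; split.
  by rewrite inE; apply/existsP; exists 0; rewrite scaler0 addr0.
move=> x y; rewrite !inE => /existsP[u /eqP hu] /existsP[v /eqP hv].
apply/existsP; exists (u + v); rewrite GL_MxE hu hv /= !one_mx KmatM //.
Qed.

Lemma memK (R : finComUnitRingType) (w : R) l p (g : {'GL_2[R]}) :
  (2 <= l)%N -> is_trunc_dvr w l p ->
  (g \in Kgrp w l) = [exists y, GLval g == 1%:M + w ^+ l.-1 *: y].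
Proof. by move=> hl hR; rewrite /Kgrp /= gen_set_id ?(Kset_group hl hR) // inE. Qed.

Definition KGL (R : finComUnitRingType) (N : R) (y : 'M[R]_2) : {'GL_2[R]} :=
  GLof (1%:M + N *: y).

Lemma KGLE (R : finComUnitRingType) (N : R) (y : 'M[R]_2) : N * N = 0 ->
  GLval (KGL N y) = 1%:M + N *: y.
Proof. by move=> hN; apply/GLofE/Kmat_unit. Qed.

Lemma KGLM (R : finComUnitRingType) (N : R) (y z : 'M[R]_2) : N * N = 0 ->
  (KGL N y * KGL N z)%g = KGL N (y + z).
Proof. by move=> hN; apply: GLval_inj; rewrite GL_MxE !KGLE // KmatM. Qed.

Lemma KGL_K (R : finComUnitRingType) (w : R) l p (y : 'M[R]_2) :
  (2 <= l)%N -> is_trunc_dvr w l p -> KGL (w ^+ l.-1) y \in Kgrp w l.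
Proof.
move=> hl hR; rewrite (memK _ hl hR); apply/existsP; exists y.
by rewrite KGLE // (trunc_NN hl hR).
Qed.

Lemma K_abelian (R : finComUnitRingType) (w : R) l p :
  (2 <= l)%N -> is_trunc_dvr w l p -> abelian (Kgrp w l).
Proof.
move=> hl hR; apply/centsP => x; rewrite (memK _ hl hR) => /existsP[y /eqP hy] z.
rewrite (memK _ hl hR) => /existsP[v /eqP hv].
apply: GLval_inj; rewrite !GL_MxE hy hv !KmatM ?(trunc_NN hl hR) //.
by rewrite (addrC y).
Qed.

Lemma KconjE (R : finComUnitRingType) (N : R) (x g : {'GL_2[R]}) (y : 'M[R]_2) :
  N * N = 0 -> GLval x = 1%:M + N *: y ->
  GLval (x ^ g)%g = 1%:M + N *: (invmx (GLval g) *m y *m GLval g).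
Proof.
move=> hN hx; rewrite conjgE !GL_MxE GL_VxE hx mulmxDl mul1mx mulmxDr mulVmx ?GL_unitmx //.
by rewrite -scalemxAl -scalemxAr mulmxA.
Qed.

Lemma K_normal (R : finComUnitRingType) (w : R) l p :
  (2 <= l)%N -> is_trunc_dvr w l p -> (Kgrp w l <| 'GL_2[R])%g.
Proof.
move=> hl hR; apply/andP; split; first exact: subsetT.
apply/subsetP => g _; rewrite inE; apply/subsetP => z /imsetP[x hx ->].
move: hx; rewrite !(memK _ hl hR) => /existsP[y /eqP hy].
apply/existsP; exists (invmx (GLval g) *m y *m GLval g).
by rewrite (KconjE _ (trunc_NN hl hR) hy).
Qed.


Lemma whitE (R : finComUnitRingType) (w : R) l p (phi1 : R -> algC)
    (theta : 'CF(Ugrp R)) (chi : 'CF('GL_2[R])) :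
  prime p -> is_trunc_dvr w l p -> Pilot.Defs.add_char phi1 ->
  (forall (g : {'GL_2[R]}) (u : R), g \in Ugrp R -> GLval g = nmat u ->
      theta g = phi1 u) ->
  '[chi, 'Ind['GL_2[R]] theta] =
     #|R|%:R^-1 * \sum_(u : R) chi (nGL u) * phi1 (- u).
Proof.
move=> pp hR hf ht.
rewrite cfdotC -Frobenius_reciprocity cfdotC conjCK cfdotE card_U sum_U.
congr (_ * _); apply: eq_bigr => u _.
rewrite cfResE ?subsetT ?nGL_U // (ht _ u) ?nGL_U ?nGLE //.
by rewrite (addc_conj _ pp hR hf).
Qed.


Lemma fix_mul0 (S c : algC) : S = S * c -> c != 1 -> S = 0.
Proof.
move=> e hc; have : S * (1 - c) = 0 by rewrite mulrBr mulr1 -e subrr.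
by move/eqP; rewrite mulf_eq0 subr_eq0 (negbTE (contra_neq (@esym _ _ _) hc)) orbF => /eqP.
Qed.

Lemma tr_scalar_conj (R : finComUnitRingType) (a : R) (h y : 'M[R]_2) :
  h \in unitmx -> \tr (a%:M *m (invmx h *m y *m h)) = \tr (a%:M *m y).
Proof.
move=> hu; rewrite !mul_scalar_mx !mxtraceZ; congr (_ * _).
by rewrite mxtrace_mulC mulmxA mulmxV // mul1mx.
Qed.

Lemma scalar_invariant (R : finComUnitRingType) (w : R) l p (phi : R -> algC)
    (psi : 'CF(Kgrp w l)) :
  (2 <= l)%N -> is_trunc_dvr w l p -> scalar_type phi psi ->
  ('GL_2[R] \subset 'I[psi])%g.
Proof.
move=> hl hR [a ha]; have hN := trunc_NN hl hR.
have nK := K_normal hl hR.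
apply/subsetP => g _; rewrite inE (subsetP (normal_norm nK)) ?inE //=.
apply/eqP/cfun_inP => x Kx; rewrite cfConjgE ?(subsetP (normal_norm nK)) ?inE //.
have := Kx; rewrite (memK _ hl hR) => /existsP[y /eqP hy].
have Kx' : (x ^ g^-1)%g \in Kgrp w l by rewrite memJ_norm ?groupV ?(subsetP (normal_norm nK)) ?inE.
rewrite (ha _ _ Kx' (KconjE _ hN hy)) (ha _ _ Kx hy).
have gu : GLval (g^-1)%g \in unitmx by exact: (@GL_unitmx 2 R (g^-1)%g).
by rewrite (@tr_scalar_conj R a (GLval (g^-1)%g) y gu).
Qed.



Lemma nmat_K (R : finComUnitRingType) (N b : R) :
  nmat (N * b) = 1%:M + N *: (b *: delta_mx 0 1).
Proof. rewrite /nmat; mx22; ring. Qed.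

Lemma tr_scalar_delta01 (R : finComUnitRingType) (a b : R) :
  \tr (a%:M *m (b *: (delta_mx 0 1 : 'M[R]_2))) = 0.
Proof. by rewrite /mxtrace !big_ord_recl big_ord0 !mxE ?big_ord_recl ?big_ord0 /= !mxE /=; ring. Qed.

Lemma nGLN_K (R : finComUnitRingType) (w : R) l p b :
  (2 <= l)%N -> is_trunc_dvr w l p -> nGL (w ^+ l.-1 * b) \in Kgrp w l.
Proof.
move=> hl hR; rewrite (memK _ hl hR); apply/existsP; exists (b *: delta_mx 0 1).
by rewrite nGLE nmat_K.
Qed.

Lemma whit_prim (R : finComUnitRingType) (w : R) (l p : nat)
    (hp : prime p) (hl : (2 <= l)%N)
    (hR : is_trunc_dvr w l p)
    (phi : R -> algC) (hphi : primitive_add_char w l phi)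
    (theta : 'CF(Ugrp R)) (htheta : nondeg_char w l theta)
    (i : Iirr 'GL_2[R]) :
  has_whittaker theta i -> primitive_irr w l phi i.
Proof.
move=> hw j hj hs; apply/negP: hw; apply/negPn.
have nK := K_normal hl hR.
have cl := Clifford_Res_sum_cfclass nK hj.
rewrite cfclass_invariant ?(scalar_invariant hl hR hs) // in cl.
have [a ha] := hs.
have hN := trunc_NN hl hR.
have j1 : 'chi_j 1%g = 1.
  have := ha 1%g 0 (group1 _); rewrite scaler0 addr0 mulmx0 mxtrace0 mulr0 => -> //.
  by case: hphi => [[]].
rewrite big_seq1 in cl.
have hker : forall b, nGL (w ^+ l.-1 * b) \in cfker 'chi_i.
  move=> b; rewrite cfkerEchar ?irr_char // !inE /=.
  have K1 := nGLN_K b hl hR.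
  rewrite -(@cfResE _ (Kgrp w l) _ 'chi_i (subsetT _) _ K1) -(@cfResE _ (Kgrp w l) _ 'chi_i (subsetT _) _ (group1 _)) cl !cfunE.
  rewrite j1 (ha _ _ K1 (etrans (nGLE _) (nmat_K _ _))) tr_scalar_delta01 mulr0.
  by case: hphi => [[-> _] _].
case: htheta => phi1 [hp1 ht]; case: (hp1) => hf1 [u0 [[r hr] hu0]].
rewrite (whitE _ hp hR hf1 ht) mulf_eq0; apply/orP; right.
apply/eqP; apply: (fix_mul0 (c := phi1 (- u0))).
  rewrite {1}(reindex_inj (addIr u0)) mulr_suml; apply: eq_bigr => u _ /=.
  rewrite -nGLM hr cfkerMr // -hr opprD addcD // mulrA //.
apply: contra hu0 => /eqP h; have := addcN u0 hf1; rewrite h mul1r => ->.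
by [].
Qed.




Lemma conj_eq (R : finComUnitRingType) (chi : 'CF('GL_2[R])) (g a b : {'GL_2[R]}) :
  GLval g *m GLval a = GLval b *m GLval g -> chi a = chi b.
Proof.
move=> e; have e' : (g * a = b * g)%g by apply: GLval_inj; rewrite !GL_MxE.
have -> : a = (b ^ g)%g by rewrite conjgE -e' mulKg.
by rewrite cfunJ ?inE.
Qed.

Definition dmat (R : finComUnitRingType) (t : R) : 'M[R]_2 :=
  \matrix_(i < 2, j < 2) (if i == j then (if i == 0 then t else 1) else 0).

Lemma dmat_unit (R : finComUnitRingType) (t : R) : t \is a GRing.unit -> dmat t \in unitmx.
Proof.
move=> tU; case: (@mulmx1_unit _ _ (dmat t) (dmat t^-1)) => //.
rewrite /dmat; mx22; rewrite ?mulrV //; ring.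
Qed.

Lemma dmat_conj (R : finComUnitRingType) (t u : R) :
  dmat t *m nmat u = nmat (t * u) *m dmat t.
Proof. rewrite /dmat /nmat; mx22; ring. Qed.

Definition E01 (R : finComUnitRingType) : 'M[R]_2 := delta_mx 0 1.
Definition E10 (R : finComUnitRingType) : 'M[R]_2 := delta_mx 1 0.
Definition E11 (R : finComUnitRingType) : 'M[R]_2 := delta_mx 1 1.
Definition Qmat (R : finComUnitRingType) : 'M[R]_2 :=
  \matrix_(i < 2, j < 2) (if j == 0 then -1 else 1).
Definition smat (R : finComUnitRingType) : 'M[R]_2 :=
  \matrix_(i < 2, j < 2) (if i == j then 0 else 1).
Definition gmat (R : finComUnitRingType) : 'M[R]_2 := 1%:M + E10 R.

Lemma smat_unit (R : finComUnitRingType) : smat R \in unitmx.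
Proof.
case: (@mulmx1_unit _ _ (smat R) (smat R)) => //; rewrite /smat; mx22; ring.
Qed.

Lemma gmat_unit (R : finComUnitRingType) : gmat R \in unitmx.
Proof.
case: (@mulmx1_unit _ _ (gmat R) (1%:M - E10 R)) => //; rewrite /gmat /E10; mx22; ring.
Qed.

Lemma smat_conj (R : finComUnitRingType) (N c : R) :
  smat R *m (1%:M + N *: (c *: E01 R)) = (1%:M + N *: (c *: E10 R)) *m smat R.
Proof. rewrite /smat /E01 /E10; mx22; ring. Qed.

Lemma gmat_conj (R : finComUnitRingType) (N c : R) :
  gmat R *m (1%:M + N *: (c *: E01 R)) = (1%:M + N *: (c *: Qmat R)) *m gmat R.
Proof. rewrite /gmat /Qmat /E01 /E10; mx22; ring. Qed.

Lemma ord2P (i : 'I_2) : i = 0 \/ i = 1.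
Proof. by case: i => [[|[|//]] ?]; [left|right]; apply: val_inj. Qed.

Lemma tr2 (R : finComUnitRingType) (y : 'M[R]_2) : \tr y = y 0 0 + y 1 1.
Proof. by rewrite /mxtrace big_ord_recl big_ord1; congr (y _ _ + y _ _); apply: val_inj. Qed.

Lemma decomp (R : finComUnitRingType) (y : 'M[R]_2) :
  y = y 0 1 *: E01 R + y 1 0 *: E10 R + (- y 0 0) *: Qmat R + y 0 0 *: E01 R
      + (- y 0 0) *: E10 R + \tr y *: E11 R.
Proof.
rewrite tr2 /Qmat /E01 /E10 /E11; apply/matrixP => i j.
by case: (ord2P i) => ->; case: (ord2P j) => ->; rewrite !mxE /=; ring.
Qed.



Lemma Ainv (R : finComUnitRingType) (chi : 'CF('GL_2[R])) (t u : R) :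
  t \is a GRing.unit -> chi (nGL (t * u)) = chi (nGL u).
Proof.
move=> tU; symmetry; apply: (conj_eq chi (g := GLof (dmat t))).
by rewrite !nGLE GLofE ?dmat_unit // dmat_conj.
Qed.

Lemma cardR_neq0 (R : finComUnitRingType) : (#|R|%:R : algC) != 0.
Proof. by rewrite pnatr_eq0 -lt0n (cardD1 0). Qed.

Lemma step_ker (R : finComUnitRingType) (w : R) l p (phi1 : R -> algC)
    (chi : 'CF('GL_2[R])) :
  (2 <= l)%N -> is_trunc_dvr w l p -> primitive_add_char w l phi1 ->
  \sum_(u : R) chi (nGL u) * phi1 (- u) = 0 ->
  forall b, chi (nGL (w ^+ l.-1 * b)) = chi 1%g.
Proof.
move=> hl hR hp1 hS b; have [hf1 _] := hp1.
set A := fun u => chi (nGL u).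
have hC : forall t, t \is a GRing.unit -> \sum_(u : R) A u * phi1 (- (t * u)) = 0.
  move=> t tU; transitivity (\sum_(u : R) chi (nGL u) * phi1 (- u)); last exact: hS.
  rewrite [RHS](reindex_inj (mulrI tU)) /=.
  by apply: eq_bigr => u _; rewrite /A Ainv.
have hX : forall c x, \sum_(u : R) A u * phi1 (c * (x - u)) =
                      phi1 (c * x) * \sum_(u : R) A u * phi1 (- (c * u)).
  move=> c x; rewrite mulr_sumr; apply: eq_bigr => u _.
  by rewrite mulrBr addcD // mulrCA.
have hF : forall x, \sum_(c : R) \sum_(u : R) A u * phi1 (c * (x - u)) = #|R|%:R * A x.
  move=> x; rewrite exchange_big /=.
  under eq_bigr do rewrite -mulr_sumr (fourier _ hR hp1) subr_eq0.
  rewrite (bigD1 x) //= eqxx big1 ?addr0 => [|u hu]; first by rewrite mulrC.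
  by rewrite eq_sym (negbTE hu) mulr0.
have hE : forall c, \sum_(u : R) A u * phi1 (c * (w ^+ l.-1 * b - u)) =
                    \sum_(u : R) A u * phi1 (c * (0 - u)).
  move=> c; case: (boolP (c \is a GRing.unit)) => cU.
    by rewrite !hX hC ?mulr0.
  apply: eq_bigr => u _; congr (_ * phi1 _).
  by rewrite !mulrBr mulrA (trunc_cN (ltnW hl) hR cU) mul0r mulr0.
have := hF (w ^+ l.-1 * b); under eq_bigr do rewrite hE.
rewrite hF => /(mulfI (cardR_neq0 R)).
by rewrite /A nGL0 => ->.
Qed.



Lemma prim_whit (R : finComUnitRingType) (w : R) (l p : nat)
    (hp : prime p) (hl : (2 <= l)%N)
    (hR : is_trunc_dvr w l p)
    (phi : R -> algC) (hphi : primitive_add_char w l phi)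
    (theta : 'CF(Ugrp R)) (htheta : nondeg_char w l theta)
    (i : Iirr 'GL_2[R]) :
  primitive_irr w l phi i -> has_whittaker theta i.
Proof.
move=> hprim; apply/negP => /eqP hz.
case: htheta => phi1 [hp1 ht]; have [hf1 _] := hp1.
have hS : \sum_(u : R) 'chi_i (nGL u) * phi1 (- u) = 0.
  move: hz; rewrite (whitE _ hp hR hf1 ht) => /eqP; rewrite mulf_eq0 invr_eq0.
  by rewrite (negbTE (cardR_neq0 R)) /= => /eqP.
have hk := step_ker hl hR hp1 hS.
have hN := trunc_NN hl hR.
set N := w ^+ l.-1 in hk hN.
have kerE : forall X, 'chi_i (KGL N X) = 'chi_i 1%g -> KGL N X \in cfker 'chi_i.
  by move=> X hX; rewrite cfkerEchar ?irr_char // !inE /= hX eqxx.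
have k12E : forall b, KGL N (b *: E01 R) = nGL (N * b).
  by move=> b; apply: GLval_inj; rewrite KGLE // nGLE nmat_K.
have k12 : forall b, KGL N (b *: E01 R) \in cfker 'chi_i.
  by move=> b; apply: kerE; rewrite k12E hk.
have k21 : forall b, KGL N (b *: E10 R) \in cfker 'chi_i.
  move=> b; apply: kerE; rewrite -(conj_eq _ (g := GLof (smat R)) (a := KGL N (b *: E01 R))).
    by rewrite k12E hk.
  by rewrite !KGLE // GLofE ?smat_unit // smat_conj.
have kQ : forall b, KGL N (b *: Qmat R) \in cfker 'chi_i.
  move=> b; apply: kerE; rewrite -(conj_eq _ (g := GLof (gmat R)) (a := KGL N (b *: E01 R))).
    by rewrite k12E hk.
  by rewrite !KGLE // GLofE ?gmat_unit // gmat_conj.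
have decE : forall y : 'M[R]_2, KGL N y =
   (KGL N (y 0%R 1%R *: E01 R) * KGL N (y 1%R 0%R *: E10 R) * KGL N ((- y 0%R 0%R) *: Qmat R)
    * KGL N (y 0%R 0%R *: E01 R) * KGL N ((- y 0%R 0%R) *: E10 R) * KGL N (\tr y *: E11 R))%g.
  by move=> y; rewrite !KGLM //; congr (KGL N _); exact: decomp.
have zker : forall y : 'M[R]_2,
   (KGL N (y 0%R 1%R *: E01 R) * KGL N (y 1%R 0%R *: E10 R) * KGL N ((- y 0%R 0%R) *: Qmat R)
    * KGL N (y 0%R 0%R *: E01 R) * KGL N ((- y 0%R 0%R) *: E10 R))%g \in cfker 'chi_i.
  move=> y; rewrite groupM ?k21 // groupM ?k12 // groupM ?kQ // groupM ?k21 ?k12 //.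
have [j hj] := neq0_has_constt (Res_irr_neq0 (Kgrp w l) i).
have ksub : (Kgrp w l :&: cfker 'chi_i \subset cfker 'chi_j)%g.
  have e := cfker_Res (subsetT (Kgrp w l)) (irr_char i).
  rewrite -e; apply: cfker_constt => //; apply: cfRes_char; apply: irr_char.
have KK : forall X, KGL N X \in Kgrp w l by move=> X; exact: (KGL_K X hl hR).
have lin : 'chi_j \is a linear_char by have /char_abelianP := K_abelian hl hR; apply.
set f := fun s => 'chi_j (KGL N (s *: E11 R)).
have KGL0 : KGL N 0 = 1%g by apply: GLval_inj; rewrite KGLE // scaler0 addr0.
have fchar : add_char f.
  split; first by rewrite /f scale0r KGL0 lin_char1.
  by move=> a b; rewrite /f scalerDl -KGLM // lin_charM.
have fN0 : forall s, N * s = 0 -> f s = 1.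
  move=> s hs; rewrite /f.
  have -> : KGL N (s *: E11 R) = 1%g.
    by apply: GLval_inj; rewrite KGLE // scalerA hs scale0r addr0.
  exact: lin_char1.
have hsum : \sum_(a : R) \sum_(s : R) f s * phi (a * (- (N * s))) != 0.
  rewrite exchange_big /=.
  under eq_bigr do rewrite -mulr_sumr (fourier _ hR hphi) oppr_eq0.
  rewrite (bigD1 0) //= mulr0 eqxx fN0 ?mulr0 // mul1r.
  apply: lt0r_neq0; apply: ltr_wpDr; last by rewrite ltr0n (cardD1 0).
  apply: sumr_ge0 => s _; case: ifP => [/eqP hs|_]; last by rewrite mulr0.
  by rewrite fN0 // mul1r ler0n.
have [a ha] : exists a, \sum_(s : R) f s * phi (a * (- (N * s))) != 0.
  case: (boolP [exists a : R, \sum_(s : R) f s * phi (a * (- (N * s))) != 0]).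
    by move/existsP.
  move/existsPn => hn; exfalso; move: hsum; rewrite big1 ?eqxx // => a _.
  exact/eqP/negbNE/hn.
have [hphiA _] := hphi.
have hh : add_char (fun s => f s * phi (a * (- (N * s)))).
  split; first by rewrite mulr0 oppr0 mulr0 (addc0 hphiA) mulr1 (addc0 fchar).
  move=> s t; rewrite (addcD _ _ fchar).
  rewrite (_ : a * - (N * (s + t)) = a * - (N * s) + a * - (N * t)); last by ring.
  by rewrite (addcD _ _ hphiA) mulrACA.
have htriv := add_char_triv hh ha.
have fE : forall s, f s = phi (N * (a * s)).
  move=> s; have := htriv s => /= e.
  rewrite -[f s]mulr1 -(addcN (N * (a * s)) hphiA) mulrA.
  rewrite (_ : - (N * (a * s)) = a * - (N * s)); last by ring.
  by rewrite e mul1r.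
apply: (hprim j hj); exists a => g y Kg hg.
have -> : g = KGL N y by apply: GLval_inj; rewrite KGLE // hg.
rewrite decE cfkerMl; last first.
  apply: (subsetP ksub); rewrite inE; apply/andP; split; last exact: zker.
  by rewrite !groupM ?KK.
change ('chi_j (KGL N (\tr y *: E11 R))) with (f (\tr y)).
by rewrite fE mul_scalar_mx mxtraceZ.
Qed.

Theorem theorem5p2 (R : finComUnitRingType) (w : R) (l p : nat)
    (hp : prime p) (hpodd : odd p) (hl : (2 <= l)%N)
    (hR : is_trunc_dvr w l p)
    (phi : R -> algC) (hphi : primitive_add_char w l phi)
    (theta : 'CF(Ugrp R)) (htheta : nondeg_char w l theta)
    (i : Iirr 'GL_2[R]) :
  has_whittaker theta i <-> primitive_irr w l phi i.
Proof.
split.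
  exact: (whit_prim hp hl hR hphi htheta).
exact: (prim_whit hp hl hR hphi htheta).
Qed.
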